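(* Let $\Gamma$ be a complete dominance graph on vertex set $\{1,\dots,n\}$ and let $\tilde{\Gamma}$ be any finite simple weighted digraph on the same vertex set with weights $0\le\tilde{w}_{ij}\le 1$. Let $L$ and $\tilde{L}$ be the graph Laplacians of $\Gamma$ and $\tilde{\Gamma}$, respectively. Then $\mathrm{hd}(L,\tilde{L})\le n-1$.
   Context: For a weighted digraph with weights $w_{ij}\ge 0$ ($w_{ij}=0$ iff $(i,j)$ is not an edge), $d^{+}(i)=\sum_j w_{ij}$, $D=\mathrm{diag}(d^{+}(1),\dots,d^{+}(n))$, $A=[w_{ij}]$, and the graph Laplacian is $L=D-A$. A complete dominance graph is an acyclic tournament (for each pair of distinct vertices exactly one of $(i,j),(j,i)$ is an edge) in which every edge has weight $1$. For $n\times n$ complex matrices $M,\tilde{M}$ with eigenvalues $\lambda_1,\dots,\lambda_n$ and $\tilde\lambda_1,\dots,\tilde\lambda_n$, the spectral variation is $\mathrm{sv}(M,\tilde M)=\max_i\min_j|\tilde\lambda_i-\lambda_j|$ and the Hausdorff distance is $\mathrm{hd}(M,\tilde M)=\max\{\mathrm{sv}(M,\tilde M),\mathrm{sv}(\tilde M,M)\}$. *)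

(* Defs.v *)
(* Real weights in an arbitrary real closed field R;
   eigenvalues taken in the algebraic closure R[i] = complex R. *)
From HB Require Import structures.
From mathcomp Require Import all_boot all_order all_algebra.
From mathcomp Require Import complex.
Set Implicit Arguments. Unset Strict Implicit. Unset Printing Implicit Defensive.
Import Order.TTheory GRing.Theory Num.Theory.
Local Open Scope ring_scope.

Section Defs.
Variable R : rcfType.

(* A weighted digraph on vertex set 'I_n is given by its weight matrix
   w = [w_ij] (w_ij >= 0, and w_ij = 0 iff (i,j) is not an edge). *)

Definition outdeg n (w : 'M[R]_n) (i : 'I_n) : R := \sum_(j < n) w i j.

Definition laplacian n (w : 'M[R]_n) : 'M[R]_n :=
  diag_mx (\row_i outdeg w i) - w.

Definition edge n (w : 'M[R]_n) : rel 'I_n := fun i j => w i j != 0.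

Definition simple_weighted_digraph n (w : 'M[R]_n) : Prop :=
  (forall i j, 0 <= w i j) /\ (forall i, w i i = 0).

Definition acyclic n (w : 'M[R]_n) : Prop :=
  ~ (exists (x : 'I_n) (s : seq 'I_n),
        [&& (0 < size s)%N, path (edge w) x s & last x s == x]).

Definition tournament n (w : 'M[R]_n) : Prop :=
  (forall i, ~~ edge w i i) /\
  (forall i j, i != j -> (edge w i j) (+) (edge w j i)).

Definition complete_dominance_graph n (w : 'M[R]_n) : Prop :=
  simple_weighted_digraph w /\ tournament w /\ acyclic w /\
  (forall i j, edge w i j -> w i j = 1).

Definition cmx n (M : 'M[R]_n) : 'M[R[i]]_n := map_mx (real_complex R) M.

(* sv(M, M') <= c, where sv(M,M') = max_i min_j |lambda'_i - lambda_j|,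
   lambda (resp. lambda') ranging over the (finitely many, nonempty set of)
   complex eigenvalues of M (resp. M').  For a max-min over finite nonempty
   sets, "max_i min_j d_ij <= c" literally means "for every i there is j
   with d_ij <= c". *)
Definition sv_le n (M M' : 'M[R]_n) (c : R) : Prop :=
  forall l', eigenvalue (cmx M') l' ->
    exists2 l, eigenvalue (cmx M) l & `|l' - l| <= (real_complex R c).

(* hd(M, M') <= c  iff  max(sv(M,M'), sv(M',M)) <= c *)
Definition hd_le n (M M' : 'M[R]_n) (c : R) : Prop :=
  sv_le M M' c /\ sv_le M' M c.

End Defs.

(* Main.v *)
Require Import Defs.
From HB Require Import structures.
From mathcomp Require Import all_boot all_order all_algebra.
From mathcomp Require Import complex.
Import Order.TTheory GRing.Theory Num.Theory.
Local Open Scope ring_scope.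
Local Open Scope complex_scope.

Lemma eig_colP (F : fieldType) n (A : 'M[F]_n) a :
  eigenvalue A a <-> exists2 u : 'cV_n, u != 0 & A *m u = a *: u.
Proof.
have E : eigenvalue A a = (\det (a%:M - A) == 0).
  apply/eigenvalueP/det0P=> [[v Av_av v_nz] | [v v_nz Av_av]]; exists v => //.
    by rewrite mulmxBr Av_av mul_mx_scalar subrr.
  by apply/eqP; rewrite -mul_mx_scalar eq_sym -subr_eq0 -mulmxBr Av_av.
rewrite E -det_tr; split.
- move/det0P=> [v vnz vA]; exists v^T; first by rewrite trmx_eq0.
  apply/eqP; rewrite eq_sym -subr_eq0 -mul_scalar_mx -mulmxBl.
  have : (v *m (a%:M - A)^T)^T = 0 by rewrite vA trmx0.
  by rewrite trmx_mul trmxK => ->.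
- move=> [u unz Au]; apply/det0P; exists u^T; first by rewrite trmx_eq0.
  by rewrite -[u^T *m _]trmxK trmx_mul !trmxK mulmxBl mul_scalar_mx Au subrr trmx0.
Qed.
Lemma acyclic_source (R : rcfType) n (w : 'M[R]_n) (S : {set 'I_n}) :
  acyclic w -> S != set0 -> exists2 j, j \in S & forall i, i \in S -> w i j = 0.
Proof.
move=> Hac SN.
case: (boolP [exists j in S, [forall i in S, w i j == 0]]).
  move=> /existsP [j /andP [jS /forallP H]]; exists j => // i iS.
  by move: (H i); rewrite iS => /eqP.
move=> Hn; exfalso; apply: Hac.
have Hp : forall j, j \in S -> exists2 i, i \in S & w i j != 0.
  move=> j jS; move: Hn; rewrite negb_exists => /forallP /(_ j).
  rewrite jS /= => H1.
  have [k] := forallPn H1.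
  rewrite negb_imply; move=> /andP [kS H].
  by exists k.
pose p j := if [pick i in S | w i j != 0] is Some i then i else j.
have pS : forall j, j \in S -> (p j \in S) && (w (p j) j != 0).
  move=> j jS; rewrite /p; case: pickP => [k /andP [-> ->] //|H0].
  by have [k kS wk] := Hp j jS; move: (H0 k); rewrite kS wk.
have [x0 x0S] := set0Pn _ SN.
have itS : forall k y, y \in S -> iter k p y \in S.
  by elim=> [|k IH] y yS //=; have /andP[] := pS _ (IH y yS).
pose f (k : 'I_n.+1) := iter k p x0.
have : ~~ injectiveb f.
  apply/negP => /injectiveP Hi; have := leq_card f Hi; by rewrite !card_ord ltnn.
move=> /injectivePn [a [b neab]].
wlog ltab : a b neab / (a < b)%N.
  move=> Hw; case: (ltngtP a b) => [h|h|h]; first exact: Hw.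
  - by move=> e; apply: (Hw b a) => //; rewrite eq_sym.
  - by move: neab; rewrite -val_eqE /= h eqxx.
rewrite /f => eab.
set y := iter a p x0.
have yS : y \in S by exact: itS.
set m := (b - a)%N.
have m0 : (0 < m)%N by rewrite subn_gt0.
have ym : iter m p y = y by rewrite /y -iterD subnK ?eab // ltnW.
pose e' := fun u v => edge w v u.
have Hpath : forall k z, z \in S -> path e' z (traject p (p z) k).
  elim=> [|k IH] z zS //=.
  have /andP [pzS wz] := pS z zS.
  by rewrite /e' /edge wz IH.
set t := traject p (p y) m.
have := Hpath m y yS; rewrite -/t -rev_path => Hr.
have lt : last y t = y by rewrite last_traject.
exists y, (rev (belast y t)).
rewrite size_rev size_belast size_traject m0 /=.
rewrite lt in Hr.
have -> : path (edge w) y (rev (belast y t)) by move: Hr; apply: sub_path => u v.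
rewrite /t; case: (m) m0 => // m' _.
by rewrite trajectS /= rev_cons last_rcons.
Qed.
Lemma lapE (R : rcfType) n (w : 'M[R]_n) i j :
  laplacian w i j = outdeg w i *+ (i == j) - w i j.
Proof. by rewrite /laplacian !mxE. Qed.

Lemma mulcol (R : rcfType) n (w : 'M[R]_n) (u : 'cV[R[i]]_n) k :
  (cmx (laplacian w) *m u) k 0 =
  (outdeg w k)%:C * u k 0 - \sum_j (w k j)%:C * u j 0.
Proof.
rewrite !mxE.
under eq_bigr => j _ do rewrite /cmx mxE lapE rmorphB /= mulrBl.
rewrite sumrB; congr (_ - _).
rewrite (bigD1 k) //= eqxx mulr1n big1 ?addr0 // => j /negbTE.
by rewrite eq_sym => ->; rewrite mulr0n rmorph0 mul0r.
Qed.

Lemma mulrow (R : rcfType) n (w : 'M[R]_n) (v : 'rV[R[i]]_n) k :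
  (v *m cmx (laplacian w)) 0 k =
  v 0 k * (outdeg w k)%:C - \sum_j v 0 j * (w j k)%:C.
Proof.
rewrite !mxE.
under eq_bigr => j _ do rewrite /cmx mxE lapE rmorphB /= mulrBr.
rewrite sumrB; congr (_ - _).
rewrite (bigD1 k) //= eqxx mulr1n big1 ?addr0 // => j /negbTE.
by move=> ->; rewrite mulr0n rmorph0 mulr0.
Qed.

Lemma sum_off (R : rcfType) n (i : 'I_n) :
  \sum_(j < n | j != i) (1 : R) = (n.-1)%:R.
Proof. by rewrite sumr_const cardC1 card_ord. Qed.

Lemma outdeg_le (R : rcfType) n (w : 'M[R]_n) i :
  (forall j, w i j <= 1) -> w i i = 0 -> outdeg w i <= (n.-1)%:R.
Proof.
move=> H1 H0; rewrite /outdeg (bigD1 i) //= H0 add0r -(sum_off R n i).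
by apply: ler_sum => j _.
Qed.

Lemma nz_col (F : fieldType) n (u : 'cV[F]_n) : u != 0 -> exists k, u k 0 != 0.
Proof.
move=> unz; apply/existsP; apply: contraNT unz; rewrite negb_exists => /forallP H.
apply/eqP/matrixP => k l; rewrite (ord1 l) mxE; exact/eqP/negPn/H.
Qed.

Lemma nz_row (F : fieldType) n (u : 'rV[F]_n) : u != 0 -> exists k, u 0 k != 0.
Proof.
move=> unz; apply/existsP; apply: contraNT unz; rewrite negb_exists => /forallP H.
apply/eqP/matrixP => l k; rewrite (ord1 l) mxE; exact/eqP/negPn/H.
Qed.

Lemma normRe (R : rcfType) (z : R[i]) : `|z| = (@complex.Re R `|z|)%:C.
Proof. by rewrite normc_def. Qed.

Lemma normC_ge0 (R : rcfType) (x : R) : 0 <= x -> `|x%:C| = x%:C.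
Proof. by move=> h; rewrite ger0_norm // ler0c. Qed.

Theorem theorem3p9 (R : rcfType) (n : nat) (w wt : 'M[R]_n) :
  complete_dominance_graph w ->
  simple_weighted_digraph wt ->
  (forall i j, wt i j <= 1) ->
  hd_le (laplacian w) (laplacian wt) (n.-1)%:R.
Proof.
move=> [[w0 wd] [[_ tour] [ac w1]]] [wt0 wtd] wt1.
have wle1 : forall i j, w i j <= 1.
  move=> i j; case E: (edge w i j); first by rewrite (w1 _ _ E).
  by move: E; rewrite /edge => /negbT/negPn/eqP ->; rewrite ler01.
have d0 : forall i, 0 <= outdeg w i by move=> i; apply: sumr_ge0.
have dt0 : forall i, 0 <= outdeg wt i by move=> i; apply: sumr_ge0.
set N : R := (n.-1)%:R.
have dN : forall i, outdeg w i <= N by move=> i; apply: outdeg_le.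
have dtN : forall i, outdeg wt i <= N by move=> i; apply: outdeg_le.
split.
- move=> l' /eig_colP [u unz Hu].
  have [k0 uk0] := nz_col _ _ _ unz.
  have [t _ Ht] := acyclic_source R n w setT ac
     (introT (set0Pn _) (ex_intro _ k0 (in_setT k0))).
  have Ht' : forall i, w i t = 0 by move=> i; apply: Ht; rewrite in_setT.
  have wtj : forall j, j != t -> w t j = 1.
    move=> j jt; apply: w1.
    have := tour _ _ jt; rewrite /edge Ht' eqxx /=; by case: (w t j != 0).
  have dtN' : outdeg w t = N.
    rewrite /outdeg /N (bigD1 t) //= wd add0r -(sum_off R n t).
    by apply: eq_bigr => j; apply: wtj.
  exists (N%:C).
    apply/eig_colP; exists (\col_j ((j == t)%:R)).
      apply/negP => /eqP/matrixP/(_ t 0); rewrite !mxE eqxx; exact/eqP/oner_neq0.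
    apply/matrixP => i z; rewrite (ord1 z) mulcol !mxE.
    rewrite (bigD1 t) //= big1 ?addr0; last first.
      by move=> j /negbTE jt; rewrite mxE jt mulr0.
    rewrite mxE eqxx mulr1 Ht' rmorph0 subr0.
    case: (eqVneq i t) => [->|it]; first by rewrite dtN' !mulr1.
    by rewrite !mulr0.
  (* Gershgorin *)
  pose i := Order.arg_max k0 xpredT (fun i => complex.Re `|u i 0|).
  have imax : forall j, `|u j 0| <= `|u i 0|.
    move=> j; rewrite (normRe _ (u j 0)) (normRe _ (u i 0)) lecR.
    rewrite /i; case: arg_maxP => // m _ Hm; exact: Hm.
  have ui0 : 0 < `|u i 0|.
    by apply: lt_le_trans (imax k0); rewrite normr_gt0.
  have row_i : (outdeg wt i)%:C * u i 0 - \sum_j (wt i j)%:C * u j 0 = l' * u i 0.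
    by rewrite -mulcol Hu !mxE.
  have Hd : `|(outdeg wt i)%:C - l'| <= (outdeg wt i)%:C.
    rewrite -(ler_pM2r ui0) -normrM mulrBl.
    have -> : (outdeg wt i)%:C * u i 0 - l' * u i 0 = \sum_j (wt i j)%:C * u j 0.
      by rewrite -row_i opprB addrC subrK.
    apply: le_trans (ler_norm_sum _ _ _) _.
    rewrite /outdeg rmorph_sum mulr_suml; apply: ler_sum => j _.
    rewrite normrM normC_ge0 //; apply: ler_wpM2l; first by rewrite ler0c.
    exact: imax.
  apply: le_trans (ler_distD ((outdeg wt i)%:C) _ _) _.
  rewrite (distrC l') (distrC _ (N%:C)) -rmorphB normC_ge0; last by rewrite subr_ge0; apply: dtN.
  apply: le_trans (lerD Hd (lexx _)) _.
  by rewrite -rmorphD addrC subrK.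
- move=> l /eigenvalueP [v Hv vnz].
  pose S := [set j | v 0 j != 0].
  have [k0 vk0] := nz_row _ _ _ vnz.
  have SN : S != set0 by apply/set0Pn; exists k0; rewrite inE.
  have [j jS Hj] := acyclic_source R n w S ac SN.
  have vj : v 0 j != 0 by move: jS; rewrite inE.
  have lE : l = (outdeg w j)%:C.
    move/matrixP: Hv => /(_ 0 j); rewrite mulrow mxE.
    rewrite big1 ?subr0; last first.
      move=> k _; case: (boolP (k \in S)) => kS; first by rewrite Hj // rmorph0 mulr0.
      by move: kS; rewrite inE negbK => /eqP ->; rewrite mul0r.
    by rewrite mulrC => /(mulIf vj).
  exists 0.
    apply/eig_colP; exists (const_mx 1).
      apply/negP => /eqP/matrixP/(_ j 0); rewrite !mxE; exact/eqP/oner_neq0.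
    apply/matrixP => k z; rewrite (ord1 z) mulcol !mxE mul0r.
    under eq_bigr => m _ do rewrite mxE mulr1.
    by rewrite mulr1 -rmorph_sum subrr.
  by rewrite subr0 lE normC_ge0 // lecR.
Qed.
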